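(* Let $\Gamma$ be the bipartite graph with vertex set $\{L_1,\dots,L_{12}\}\sqcup\{M_1,\dots,M_{12}\}$, where no two $L$'s and no two $M$'s are adjacent, and $L_i$ is adjacent to $M_j$ if and only if $j\in N(i)$, with $N(1)=\{1,2,6,8,9,12\}$, $N(2)=\{1,2,5,7,10,11\}$, $N(3)=\{3,4,6,8,10,11\}$, $N(4)=\{3,4,5,7,9,12\}$, $N(5)=\{2,4,5,6,10,12\}$, $N(6)=\{1,3,5,6,9,11\}$, $N(7)=\{2,4,7,8,9,11\}$, $N(8)=\{1,3,7,8,10,12\}$, $N(9)=\{1,4,6,7,9,10\}$, $N(10)=\{2,3,5,8,9,10\}$, $N(11)=\{2,3,6,7,11,12\}$, $N(12)=\{1,4,5,8,11,12\}$. Let $\mathbb{Z}\Gamma$ be the free abelian group on the $24$ vertices with the symmetric bilinear form whose Gram matrix is $A-2\mathbb{I}_{24}$ ($A$ the adjacency matrix of $\Gamma$), and let $S=\mathbb{Z}\Gamma/\operatorname{rad}(\mathbb{Z}\Gamma)$, where $\operatorname{rad}(\mathbb{Z}\Gamma)$ is the kernel of the form. Then $S$ has rank $15$ and is freely generated by the images of $L_2, L_3, L_4, L_5, L_6, L_7, L_8, L_{11}, M_1, M_2, M_3, M_6, M_8, M_9, M_{12}$. Moreover, the discriminant group $S^\vee/S$ is isomorphic to $(\mathbb{Z}/2\mathbb{Z})^{\oplus 4}\oplus\mathbb{Z}/16\mathbb{Z}$.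
   Context: The radical of a lattice $L$ is $L^\perp=\{v\in L: v\cdot w=0\ \forall w\in L\}$; $S$ is a nondegenerate lattice and $S^\vee=\operatorname{Hom}(S,\mathbb{Z})$ is its dual. *)

(* Defs.v *)
From mathcomp Require Import all_boot all_order all_algebra.
Set Implicit Arguments. Unset Strict Implicit. Unset Printing Implicit Defensive.
Import GRing.Theory Num.Theory.
Local Open Scope ring_scope.

Definition Nbr (i : nat) : seq nat :=
  match i with
  | 1 => [:: 1; 2; 6; 8; 9; 12]%N
  | 2 => [:: 1; 2; 5; 7; 10; 11]%N
  | 3 => [:: 3; 4; 6; 8; 10; 11]%N
  | 4 => [:: 3; 4; 5; 7; 9; 12]%N
  | 5 => [:: 2; 4; 5; 6; 10; 12]%N
  | 6 => [:: 1; 3; 5; 6; 9; 11]%N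
  | 7 => [:: 2; 4; 7; 8; 9; 11]%N
  | 8 => [:: 1; 3; 7; 8; 10; 12]%N
  | 9 => [:: 1; 4; 6; 7; 9; 10]%N
  | 10 => [:: 2; 3; 5; 8; 9; 10]%N
  | 11 => [:: 2; 3; 6; 7; 11; 12]%N
  | 12 => [:: 1; 4; 5; 8; 11; 12]%N
  | _ => [::]
  end.

(* Vertices are indexed by 'I_24: L_i is index i-1 (0..11), M_j is index 11+j (12..23). *)
Definition Lv (i : nat) : 'I_24 := inord i.-1.
Definition Mv (j : nat) : 'I_24 := inord (11 + j).

Definition adj (a b : 'I_24) : bool :=
  [&& (a < 12)%N, (12 <= b)%N & ((b - 11)%N \in Nbr a.+1)]
  || [&& (b < 12)%N, (12 <= a)%N & ((a - 11)%N \in Nbr b.+1)].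

Definition Gram : 'M[int]_24 :=
  \matrix_(a, b) ((adj a b)%:R - ((a == b)%:R *+ 2)).

(* Radical (kernel) of the form: v with v . w = 0 for all w, i.e. v *m Gram = 0. *)
Definition radZG : pred 'rV[int]_24 := fun v => v *m Gram == 0.

Definition evec (a : 'I_24) : 'rV[int]_24 := delta_mx 0 a.

Definition gens : seq 'I_24 :=
  [:: Lv 2; Lv 3; Lv 4; Lv 5; Lv 6; Lv 7; Lv 8; Lv 11;
      Mv 1; Mv 2; Mv 3; Mv 6; Mv 8; Mv 9; Mv 12].
Definition gen (k : 'I_15) : 'I_24 := nth ord0 gens k.

(* Dual S^vee = Hom(S, Z): homomorphisms Z Gamma -> Z vanishing on the radical,
   represented by column vectors w (v |-> v *m w). *)
Definition dualS (w : 'cV[int]_24) : Prop := forall r, r \in radZG -> r *m w = 0.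

(* The image of S in S^vee: functionals y |-> y . x = y *m Gram *m x^T. *)
Definition inS (w : 'cV[int]_24) : Prop := exists x : 'rV[int]_24, w = Gram *m x^T.

Definition Dtarget : zmodType := ('Z_2 * 'Z_2 * 'Z_2 * 'Z_2 * 'Z_16)%type.

(* Main.v *)
Require Import Defs.
From mathcomp Require Import all_boot all_order all_algebra.
Import GRing.Theory Num.Theory.
Local Open Scope ring_scope.
From mathcomp Require Import ring.

Definition adjn (a b : nat) : bool :=
  [&& (a < 12)%N, (12 <= b)%N & ((b - 11)%N \in Nbr a.+1)]
  || [&& (b < 12)%N, (12 <= a)%N & ((a - 11)%N \in Nbr b.+1)].
Definition gr (a b : nat) : int := (adjn a b)%:R - ((a == b)%:R *+ 2).
Definition gensN : seq nat := [:: 1; 2; 3; 4; 5; 6; 7; 10; 12; 13; 14; 17; 19; 20; 23]%N.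
Definition gN (k : nat) : nat := nth 0%N gensN k.
Definition tb (T : seq (seq int)) (i j : nat) : int := nth 0 (nth [::] T i) j.
Definition fsum (n : nat) (F : nat -> int) : int := foldr (fun k s => F k + s) 0 (iota 0 n).
Definition chk2 (n m : nat) (p : nat -> nat -> bool) : bool :=
  all (fun i => all (fun j => p i j) (iota 0 m)) (iota 0 n).
Definition Wt : seq (seq int) :=
  [:: [:: (-1); 1; 1; (-1); 1; (-1); 1; 0; 0; (-2); 2; 0; 0; 0; 0];
     [:: 1; 0; 0; 0; 0; 0; 0; 0; 0; 0; 0; 0; 0; 0; 0];
     [:: 0; 1; 0; 0; 0; 0; 0; 0; 0; 0; 0; 0; 0; 0; 0];
     [:: 0; 0; 1; 0; 0; 0; 0; 0; 0; 0; 0; 0; 0; 0; 0];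
     [:: 0; 0; 0; 1; 0; 0; 0; 0; 0; 0; 0; 0; 0; 0; 0];
     [:: 0; 0; 0; 0; 1; 0; 0; 0; 0; 0; 0; 0; 0; 0; 0];
     [:: 0; 0; 0; 0; 0; 1; 0; 0; 0; 0; 0; 0; 0; 0; 0];
     [:: 0; 0; 0; 0; 0; 0; 1; 0; 0; 0; 0; 0; 0; 0; 0];
     [:: 0; 0; 0; 1; (-1); 0; 0; 1; (-1); 1; 0; 0; 0; (-1); 1];
     [:: 0; 0; 0; 1; 0; (-1); 0; 1; 0; 0; 0; 1; (-1); (-1); 1];
     [:: 0; 0; 0; 0; 0; 0; 0; 1; 0; 0; 0; 0; 0; 0; 0];
     [:: 0; 0; 0; 1; 0; 0; (-1); 1; (-1); 1; 0; 1; (-1); 0; 0];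
     [:: 0; 0; 0; 0; 0; 0; 0; 0; 1; 0; 0; 0; 0; 0; 0];
     [:: 0; 0; 0; 0; 0; 0; 0; 0; 0; 1; 0; 0; 0; 0; 0];
     [:: 0; 0; 0; 0; 0; 0; 0; 0; 0; 0; 1; 0; 0; 0; 0];
     [:: 0; 0; 0; (-1); 1; (-1); 1; 0; 1; (-1); 1; 0; 0; 0; 0];
     [:: (-1); 1; 0; (-1); 0; 0; 1; 0; 0; (-1); 1; 0; 1; 0; 0];
     [:: 0; 0; 0; 0; 0; 0; 0; 0; 0; 0; 0; 1; 0; 0; 0];
     [:: (-1); 1; 0; 0; 1; (-1); 0; 0; 0; (-1); 1; 1; 0; 0; 0];
     [:: 0; 0; 0; 0; 0; 0; 0; 0; 0; 0; 0; 0; 1; 0; 0];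
     [:: 0; 0; 0; 0; 0; 0; 0; 0; 0; 0; 0; 0; 0; 1; 0];
     [:: (-1); 0; 1; (-1); 1; 0; 0; 0; 0; (-1); 1; 0; 0; 1; 0];
     [:: (-1); 0; 1; 0; 0; (-1); 1; 0; 0; (-1); 1; 0; 0; 0; 1];
     [:: 0; 0; 0; 0; 0; 0; 0; 0; 0; 0; 0; 0; 0; 0; 1]].
Definition Ut : seq (seq int) :=
  [:: [:: 1; 0; 0; 0; 0; 0; 0; 0; 0; 0; 0; 0; 0; 0; 0];
     [:: 0; 1; 0; 0; 0; 0; 0; 0; 0; 0; 0; 0; 0; 0; 0];
     [:: 0; 1; (-1); 0; 0; 0; 0; 0; 0; 0; 0; 0; 0; 0; 0];
     [:: 0; (-1); 1; 1; 0; 0; 0; 0; 0; 0; 0; 0; 0; 0; 0];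
     [:: 0; 0; 1; 1; 0; 0; 0; (-1); 0; 0; 0; 0; 0; 0; 0];
     [:: 2; 2; 0; 0; 0; 0; 0; (-2); 1; 0; 0; 0; 0; 0; 0];
     [:: 0; (-2); 0; 0; 0; 0; 0; 2; 0; 1; 0; 0; 0; 0; 0];
     [:: (-2); (-2); 0; (-2); 0; 0; 0; 4; (-1); 0; 1; 0; 0; 0; 0];
     [:: 0; 2; 0; 2; 0; 0; 0; (-2); 0; 0; 0; 1; 0; 0; 0];
     [:: 33; (-3); (-2); (-21); 0; 0; 9; (-10); 21; 1; (-3); (-17); 0; (-1); 0];
     [:: 16; (-3); (-1); (-9); 0; 1; 4; (-4); 10; 2; (-2); (-8); 0; 0; 0];
     [:: (-4); 0; 0; 4; 0; 0; (-2); 2; (-3); 1; 0; 3; (-1); 0; 0];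
     [:: (-5); 1; 0; 4; (-1); (-1); (-2); 2; (-4); 0; 0; 3; (-1); (-1); 1];
     [:: 0; (-2); (-2); 8; (-4); 0; (-4); 4; (-4); 6; (-4); 3; (-3); (-3); 3];
     [:: (-10); 12; 12; (-37); 19; (-3); 19; (-18); 14; (-34); 22; (-12); 14; 14; (-12)]].
Definition Uit : seq (seq int) :=
  [:: [:: 1; 0; 0; 0; 0; 0; 0; 0; 0; 0; 0; 0; 0; 0; 0];
     [:: 0; 1; 0; 0; 0; 0; 0; 0; 0; 0; 0; 0; 0; 0; 0];
     [:: 0; 1; (-1); 0; 0; 0; 0; 0; 0; 0; 0; 0; 0; 0; 0];
     [:: 0; 0; 1; 1; 0; 0; 0; 0; 0; 0; 0; 0; 0; 0; 0];
     [:: 1; 1; 0; (-1); 2; 0; 0; 2; (-2); 20; (-57); 20; (-87); 69; 10];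
     [:: 0; 0; 0; 1; 0; 0; (-2); 2; 0; 8; (-23); 8; (-36); 28; 4];
     [:: 1; 1; (-1); (-1); 0; (-2); 0; 0; 2; (-2); 6; (-2); 9; (-7); (-1)];
     [:: 0; 1; 0; 1; (-1); 0; 0; 0; 0; 0; 0; 0; 0; 0; 0];
     [:: (-2); 0; 0; 2; (-2); 1; 0; 0; 0; 0; 0; 0; 0; 0; 0];
     [:: 0; 0; 0; (-2); 2; 0; 1; 0; 0; 0; 0; 0; 0; 0; 0];
     [:: 0; (-2); 2; 0; 2; 1; 0; 1; 0; 0; 0; 0; 0; 0; 0];
     [:: 0; 0; (-2); 0; (-2); 0; 0; 0; 1; 0; 0; 0; 0; 0; 0];
     [:: 0; 0; 0; 0; 0; 1; 1; 0; (-1); 4; (-12); 3; (-18); 14; 2];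
     [:: 0; 0; 0; 0; (-2); 0; 1; (-3); 1; (-19); 54; (-18); 81; (-63); (-9)];
     [:: 0; 0; 0; 0; 0; 1; 0; 1; (-1); 9; (-26); 9; (-41); 34; 5]].
Definition Vt : seq (seq int) :=
  [:: [:: 0; 0; 0; 0; 0; 0; 0; 0; 0; 0; 0; 0; 0; 1; 2];
     [:: 0; 0; 0; 0; 0; 0; 0; 0; 0; 0; 0; 1; (-2); 3; 4];
     [:: 0; 0; 0; 0; 0; 0; 0; 1; 0; 7; (-40); 13; (-60); 46; 52];
     [:: 0; 0; 0; 0; 0; 0; 0; 0; 0; 0; 0; 0; 0; 0; 1];
     [:: 0; 0; 0; 0; 0; 0; 0; 0; 1; (-5); 28; (-11); 42; (-33); (-39)];
     [:: 0; 0; 0; 0; 0; 0; 1; 0; 0; 3; (-16); 6; (-22); 19; 23];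
     [:: 0; 0; 0; 0; 0; 1; 0; 0; (-1); 1; (-6); 3; (-10); 8; 9];
     [:: 0; 0; 0; 0; 0; 0; 0; 0; 0; 1; (-6); 2; (-10); 8; 10];
     [:: 1; 0; 0; (-1); 1; 0; 0; 0; 0; (-2); 11; (-4); 16; (-12); (-14)];
     [:: 0; 0; 0; 1; (-1); 0; 0; 0; 0; 2; (-11); 4; (-16); 14; 18];
     [:: 0; 1; (-1); 0; (-1); 0; 0; 0; 0; 2; (-12); 4; (-20); 16; 18];
     [:: 0; 0; 1; 0; 1; 0; 0; 0; 0; (-2); 11; (-4); 15; (-11); (-12)];
     [:: 0; 0; 0; 0; 0; 0; 0; 0; 0; 0; 1; 2; 1; 1; 2];
     [:: 0; 0; 0; 0; 1; 0; 0; 2; 0; 12; (-68); 22; (-101); 79; 90];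
     [:: 0; 0; 0; 0; 0; 0; 0; 0; 0; 0; 0; 0; 1; (-3); (-4)]].
Definition Yt : seq (seq int) :=
  [:: [:: (-20); 8; 8; (-10); 6; (-6); 6; (-4); (-4); (-20); 12; 0; 4; 4; 0];
     [:: 8; (-16); 0; 12; (-4); 4; (-4); 8; 0; 16; (-8); 0; (-8); 0; 8];
     [:: 8; 0; (-16); 12; (-4); 4; (-4); 8; 0; 16; (-8); 8; 0; (-8); 0];
     [:: (-10); 12; 12; (-37); 19; (-3); 19; (-18); 14; (-34); 22; (-12); 14; 14; (-12)];
     [:: 6; (-4); (-4); 19; (-21); 5; (-5); 14; (-10); 22; (-10); 4; (-2); (-10); 12];
     [:: (-6); 4; 4; (-3); 5; (-21); 5; 2; 2; (-14); 10; 4; (-6); (-6); 4];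
     [:: 6; (-4); (-4); 19; (-5); 5; (-21); 14; (-10); 22; (-10); 12; (-10); (-2); 4];
     [:: (-4); 8; 8; (-18); 14; 2; 14; (-20); 12; (-20); 12; (-8); 12; 12; (-8)];
     [:: (-4); 0; 0; 14; (-10); 2; (-10); 12; (-20); 12; (-4); 8; (-4); (-4); 8];
     [:: (-20); 16; 16; (-34); 22; (-14); 22; (-20); 12; (-52); 28; (-8); 12; 12; (-8)];
     [:: 12; (-8); (-8); 22; (-10); 10; (-10); 12; (-4); 28; (-20); 8; (-4); (-4); 8];
     [:: 0; 0; 8; (-12); 4; 4; 12; (-8); 8; (-8); 8; (-16); 8; 8; 0];
     [:: 4; (-8); 0; 14; (-2); (-6); (-10); 12; (-4); 12; (-4); 8; (-20); (-4); 8];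
     [:: 4; 0; (-8); 14; (-10); (-6); (-2); 12; (-4); 12; (-4); 8; (-4); (-20); 8];
     [:: 0; 8; 0; (-12); 12; 4; 4; (-8); 8; (-8); 8; 0; 8; 8; (-16)]].
Definition Bt : seq (seq int) :=
  [:: [:: (-28); 0; 0; 0; 0; (-57); (-23); 6; (-23); (-45); 0; 6; 0; 0; 0; (-28); (-6); 0; (-34); (-12); 54; (-3); 3; (-26)];
     [:: 10; 0; 0; 0; 0; 20; 8; (-2); 7; 16; 0; (-1); 0; 0; 0; 10; 1; 0; 12; 3; (-18); 2; (-1); 9];
     [:: (-42); 0; 0; 0; 0; (-87); (-36); 9; (-35); (-68); 0; 9; 0; 0; 0; (-42); (-9); 0; (-51); (-18); 81; (-6); 4; (-41)];
     [:: 34; 0; 0; 0; 0; 69; 28; (-7); 28; 55; 0; (-7); 0; 0; 0; 34; 7; 0; 41; 14; (-63); 6; (-1); 34];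
     [:: 5; 0; 0; 0; 0; 10; 4; (-1); 4; 8; 0; (-1); 0; 0; 0; 5; 1; 0; 6; 2; (-9); 1; 0; 5]].
Definition Zt : seq (seq int) :=
  [:: [:: 0; 0; 0; (-320); 0; 224; (-128); (-48); 0; 0; (-48); 0; 88; (-88); (-96); 0; 0; 88; 0; 8; (-544); 0; 0; 0];
     [:: 0; 0; 8; 104; 0; (-88); 48; 24; 0; 0; 16; 0; (-32); 32; 32; 0; 0; (-32); 0; 16; 176; 0; 0; 0];
     [:: 0; 0; (-16); (-480); 0; 336; (-176); (-80); 0; 0; (-80); 0; 128; (-128); (-160); 0; 0; 120; 0; 8; (-808); 0; 0; 8];
     [:: 0; 8; 24; 368; 0; (-264); 152; 64; 0; 0; 64; 0; (-96); 112; 128; 0; 0; (-88); 0; 8; 632; 0; 0; (-24)];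
     [:: 0; 2; 4; 52; 1; (-39); 23; 9; 0; 0; 10; 0; (-14); 18; 18; 0; 0; (-12); 0; 2; 90; 0; 0; (-4)]].
Definition Dn : seq int := [:: 1; 1; 1; 1; 1; 1; 1; 1; 1; 1; 2; 2; 2; 2; 16].

Definition c1 := chk2 24 24 (fun a j => gr a j == fsum 15 (fun k => tb Wt a k * gr (gN k) j)).
Lemma c1_ok : c1. Proof. vm_compute. reflexivity. Qed.
Definition c2 := chk2 15 15 (fun k i => fsum 15 (fun m => gr (gN k) (gN m) * tb Yt m i) == 16 * (k == i)%:R).
Lemma c2_ok : c2. Proof. vm_compute. reflexivity. Qed.
Definition c4 := chk2 15 15 (fun m i => fsum 15 (fun k => gr (gN m) (gN k) * tb Vt k i) == tb Uit m i * nth 0 Dn i).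
Lemma c4_ok : c4. Proof. vm_compute. reflexivity. Qed.
Definition c5 := chk2 15 15 (fun m k => fsum 15 (fun i => tb Uit m i * tb Ut i k) == (m == k)%:R).
Lemma c5_ok : c5. Proof. vm_compute. reflexivity. Qed.
Definition c6 := chk2 5 24 (fun i a => (nth 0 Dn (10 + i) %| fsum 15 (fun k => tb Ut (10 + i) k * gr (gN k) a))%Z).
Lemma c6_ok : c6. Proof. vm_compute. reflexivity. Qed.
Definition c7 := chk2 5 24 (fun j a => 16 * tb Bt j a == fsum 24 (fun c => gr a c * tb Zt j c)).
Lemma c7_ok : c7. Proof. vm_compute. reflexivity. Qed.
Definition c8 := chk2 5 5 (fun i j => fsum 15 (fun k => tb Ut (10 + i) k * tb Bt j (gN k)) == (i == j)%:R).
Lemma c8_ok : c8. Proof. vm_compute. reflexivity. Qed.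
Definition c9 := all (fun i => nth 0 Dn i == 1) (iota 0 10) && all (fun k => gN k < 24)%N (iota 0 15).
Lemma c9_ok : c9. Proof. vm_compute. reflexivity. Qed.

Lemma fsumE n (F : nat -> int) : \sum_(k < n) F k = fsum n F.
Proof.
rewrite -(big_mkord xpredT F) /index_iota subn0 /fsum.
by elim: (iota 0 n) => [|x s IH]; rewrite ?big_nil ?big_cons ?IH.
Qed.

Lemma chk2P {n m p} : chk2 n m p -> forall (i : 'I_n) (j : 'I_m), p i j.
Proof.
rewrite /chk2 => H i j.
have Hi : nat_of_ord i \in iota 0 n by rewrite mem_iota add0n ltn_ord.
have Hj : nat_of_ord j \in iota 0 m by rewrite mem_iota add0n ltn_ord.
exact: (allP (allP H _ Hi) _ Hj).
Qed.

Lemma genE (k : 'I_15) : val (gen k) = gN k.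
Proof.
rewrite /gen; have -> : gens = map (fun n => inord n) gensN by [].
rewrite (nth_map 0%N) ?size_map //= inordK //.
move: c9_ok => /andP[_ /allP H]; apply: H; rewrite mem_iota add0n; exact: ltn_ord.
Qed.

Lemma GramE (a b : 'I_24) : Gram a b = gr a b.
Proof. by rewrite mxE. Qed.

Lemma C1 (a j : 'I_24) : gr a j = \sum_(k < 15) tb Wt a k * gr (gN k) j.
Proof. by rewrite (fsumE 15 (fun k => tb Wt a k * gr (gN k) j)); apply/eqP; exact: (chk2P c1_ok a j). Qed.
Lemma C2 (k i : 'I_15) : \sum_(m < 15) gr (gN k) (gN m) * tb Yt m i = 16 * (k == i)%:R.
Proof. by rewrite (fsumE 15 (fun m => gr (gN k) (gN m) * tb Yt m i)); apply/eqP; exact: (chk2P c2_ok k i). Qed.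
Lemma C4 (m i : 'I_15) : \sum_(k < 15) gr (gN m) (gN k) * tb Vt k i = tb Uit m i * nth 0 Dn i.
Proof. by rewrite (fsumE 15 (fun k => gr (gN m) (gN k) * tb Vt k i)); apply/eqP; exact: (chk2P c4_ok m i). Qed.
Lemma C5 (m k : 'I_15) : \sum_(i < 15) tb Uit m i * tb Ut i k = (m == k)%:R.
Proof. by rewrite (fsumE 15 (fun i => tb Uit m i * tb Ut i k)); apply/eqP; exact: (chk2P c5_ok m k). Qed.
Lemma C6 (i : 'I_5) (a : 'I_24) : (nth 0 Dn (10 + i) %| \sum_(k < 15) tb Ut (10 + i) k * gr (gN k) a)%Z.
Proof. by rewrite (fsumE 15 (fun k => tb Ut (10 + i) k * gr (gN k) a)); exact: (chk2P c6_ok i a). Qed.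
Lemma C7 (j : 'I_5) (a : 'I_24) : 16 * tb Bt j a = \sum_(c < 24) gr a c * tb Zt j c.
Proof. by rewrite (fsumE 24 (fun c => gr a c * tb Zt j c)); apply/eqP; exact: (chk2P c7_ok j a). Qed.
Lemma C8 (i j : 'I_5) : \sum_(k < 15) tb Ut (10 + i) k * tb Bt j (gN k) = (i == j)%:R.
Proof. by rewrite (fsumE 15 (fun k => tb Ut (10 + i) k * tb Bt j (gN k))); apply/eqP; exact: (chk2P c8_ok i j). Qed.
Lemma C9 (i : nat) : (i < 10)%N -> nth 0 Dn i = 1.
Proof.
move=> Hi; move: c9_ok => /andP[/allP H _]; apply/eqP; apply: H.
by rewrite mem_iota add0n.
Qed.

Lemma radP (v : 'rV[int]_24) : v \in radZG <-> forall j, (v *m Gram) 0 j = 0.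
Proof.
rewrite unfold_in /radZG; split => [/eqP -> j|H]; first by rewrite mxE.
by apply/eqP/rowP => j; rewrite H mxE.
Qed.

Lemma evecM (a : 'I_24) n (M : 'M[int]_(24, n)) j : (evec a *m M) 0 j = M a j.
Proof. by rewrite /evec -rowE mxE. Qed.

Lemma sumM (c : 'I_15 -> int) n (M : 'M[int]_(24, n)) j :
  ((\sum_k c k *: evec (gen k)) *m M) 0 j = \sum_k c k * M (gen k) j.
Proof.
rewrite mulmx_suml summxE; apply: eq_bigr => k _.
by rewrite -scalemxAl [LHS]mxE evecM.
Qed.

Lemma combM (v : 'rV[int]_24) (c : 'I_15 -> int) n (M : 'M[int]_(24, n)) j :
  ((v - \sum_k c k *: evec (gen k)) *m M) 0 j = (v *m M) 0 j - \sum_k c k * M (gen k) j.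
Proof. by rewrite -sumM mulmxBl !mxE. Qed.

Lemma GramG (m : 'I_24) (k : 'I_15) : Gram m (gen k) = gr m (gN k).
Proof. by rewrite GramE genE. Qed.
Lemma GramG' (k : 'I_15) (m : 'I_24) : Gram (gen k) m = gr (gN k) m.
Proof. by rewrite GramE genE. Qed.

Lemma spanning (v : 'rV[int]_24) : exists c : 'rV[int]_15,
      v - \sum_(k < 15) c 0 k *: evec (gen k) \in radZG.
Proof.
exists (\row_k \sum_(a < 24) v 0 a * tb Wt a k).
apply/radP => j; rewrite combM mxE.
under [X in _ - X]eq_bigr do rewrite mxE GramG' mulr_suml.
rewrite exchange_big /= -sumrB; apply: big1 => a _.
rewrite GramE (C1 a j) mulr_sumr -sumrB; apply: big1 => k _.
by rewrite mulrA subrr.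
Qed.

Lemma indep (c : 'rV[int]_15) :
  \sum_(k < 15) c 0 k *: evec (gen k) \in radZG -> c = 0.
Proof.
move/radP => H.
have Hm : forall m : 'I_15, \sum_k c 0 k * gr (gN k) (gN m) = 0.
  move=> m; have := H (gen m); rewrite sumM.
  by under eq_bigr do rewrite GramE !genE.
apply/rowP => i; rewrite mxE.
have E1 : \sum_k c 0 k * (16 * (k == i)%:R) = 16 * c 0 i.
  rewrite (bigD1 i) //= eqxx big1 ?addr0; first by rewrite mulr1 mulrC.
  by move=> k /negbTE ->; rewrite /= ?mulr0n !mulr0.
have E2 : \sum_k c 0 k * (16 * (k == i)%:R)
          = \sum_(m < 15) (\sum_k c 0 k * gr (gN k) (gN m)) * tb Yt m i.
  under eq_bigr => k _ do rewrite -(C2 k i) mulr_sumr.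
  rewrite exchange_big; apply: eq_bigr => m _; rewrite mulr_suml.
  by apply: eq_bigr => k _; rewrite mulrA.
have : 16 * c 0 i = 0.
  by rewrite -E1 E2 big1 // => m _; rewrite Hm mul0r.
by move/eqP; rewrite mulf_eq0 => /orP[//|/eqP].
Qed.

Lemma zmodK (p' : nat) (z : int) :
  ((z%:~R : 'Z_(p'.+2)) == 0) = (p'.+2%:Z %| z)%Z.
Proof.
have p2 : (1 < p'.+2)%N by [].
rewrite {1}(divz_eq z p'.+2) intrD intrM.
have -> : ((p'.+2)%:Z%:~R : 'Z_(p'.+2)) = 0 by rewrite -pmulrn pchar_Zp.
rewrite mulr0 add0r.
have r0 : 0 <= (z %% p'.+2)%Z by rewrite modz_ge0.
have rlt : (z %% p'.+2 < p'.+2)%Z by rewrite ltz_pmod.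
apply/idP/idP.
- move=> H; apply/dvdz_mod0P; move: H r0 rlt.
  case: (z %% p'.+2)%Z => // k.
  rewrite -pmulrn => /eqP Hk _ klt.
  have := val_Zp_nat p2 k; rewrite Hk modn_small; last by rewrite -ltz_nat.
  by move=> <-.
- by move/dvdz_mod0P ->.
Qed.

Lemma zK (p' : nat) (x : 'Z_(p'.+2)) : ((val x)%:Z%:~R : 'Z_(p'.+2)) = x.
Proof. by rewrite -pmulrn natr_Zp. Qed.

Definition u (i : nat) (w : 'cV[int]_24) : int := \sum_(k < 15) tb Ut i k * w (gen k) 0.
Definition phi (w : 'cV[int]_24) : Dtarget :=
  ((u 10 w)%:~R, (u 11 w)%:~R, (u 12 w)%:~R, (u 13 w)%:~R, (u 14 w)%:~R).

Lemma uD i w1 w2 : u i (w1 + w2) = u i w1 + u i w2.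
Proof. by rewrite /u -big_split; apply: eq_bigr => k _; rewrite mxE mulrDr. Qed.
Lemma uZ i c w : u i (c *: w) = c * u i w.
Proof. by rewrite /u mulr_sumr; apply: eq_bigr => k _; rewrite mxE mulrCA. Qed.
Lemma u_sum i (F : 'I_5 -> 'cV[int]_24) : u i (\sum_j F j) = \sum_j u i (F j).
Proof.
rewrite /u; under eq_bigr do rewrite summxE mulr_sumr.
by rewrite exchange_big.
Qed.

Lemma phiD w1 w2 : phi (w1 + w2) = phi w1 + phi w2.
Proof. by rewrite /phi !uD !intrD. Qed.

Lemma dualSD w1 w2 : dualS w1 -> dualS w2 -> dualS (w1 + w2).
Proof. by move=> H1 H2 r Hr; rewrite mulmxDr H1 ?H2 ?addr0. Qed.
Lemma dualSZ c w : dualS w -> dualS (c *: w).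
Proof. by move=> H r Hr; rewrite -scalemxAr H ?scaler0. Qed.
Lemma dualS_sum (F : 'I_5 -> 'cV[int]_24) : (forall j, dualS (F j)) -> dualS (\sum_j F j).
Proof.
move=> H; apply: (big_ind dualS) => //; last exact: dualSD.
by move=> r _; rewrite mulmx0.
Qed.

Lemma dualS_crit (d : int) w (z : 'cV[int]_24) :
  d != 0 -> d *: w = Gram *m z -> dualS w.
Proof.
move=> d0 E r; rewrite unfold_in /radZG => /eqP Hr.
have : d *: (r *m w) = 0 by rewrite scalemxAr E mulmxA Hr mul0mx.
move=> H; apply/matrixP => i j; have := congr1 (fun M : 'M[int]_(1,1) => M i j) H.
by rewrite !mxE => /eqP; rewrite mulf_eq0 (negbTE d0) /= => /eqP.
Qed.

Lemma GramM_dual (x : 'cV[int]_24) : dualS (Gram *m x).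
Proof. by move=> r; rewrite unfold_in /radZG => /eqP Hr; rewrite mulmxA Hr mul0mx. Qed.

Definition bvec (j : nat) : 'cV[int]_24 := \col_a tb Bt j a.
Definition zvec (j : nat) : 'cV[int]_24 := \col_a tb Zt j a.

Lemma bvec_dual (j : 'I_5) : dualS (bvec j).
Proof.
apply: (@dualS_crit 16 _ (zvec j)) => //.
apply/colP => a; rewrite !mxE C7; apply: eq_bigr => c _.
by rewrite !mxE.
Qed.

Lemma u_bvec (i j : 'I_5) : u (10 + i) (bvec j) = (i == j)%:R.
Proof.
rewrite -C8 /u; apply: eq_bigr => k _; by rewrite mxE genE.
Qed.

Lemma surj (d : Dtarget) : exists2 w, dualS w & phi w = d.
Proof.
case: d => [[[[d1 d2] d3] d4] d5].
pose dv (j : 'I_5) : nat := nth 0%N [:: val d1; val d2; val d3; val d4; val d5] j.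
exists (\sum_(j < 5) (dv j)%:Z *: bvec j).
  by apply: dualS_sum => j; apply: dualSZ; apply: bvec_dual.
have uw : forall i : 'I_5, u (10 + i) (\sum_(j < 5) (dv j)%:Z *: bvec j) = (dv i)%:Z.
  move=> i; rewrite u_sum (bigD1 i) //= uZ u_bvec eqxx mulr1 big1 ?addr0 //.
  by move=> j Hj; rewrite uZ u_bvec eq_sym (negbTE Hj) mulr0.
rewrite /phi.
have := uw (@Ordinal 5 0 isT); have := uw (@Ordinal 5 1 isT); have := uw (@Ordinal 5 2 isT).
have := uw (@Ordinal 5 3 isT); have := uw (@Ordinal 5 4 isT).
rewrite /= => -> -> -> -> ->.
by rewrite !zK.
Qed.

Lemma ext w : dualS w -> forall a : 'I_24, w a 0 = \sum_(k < 15) tb Wt a k * w (gen k) 0.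
Proof.
move=> Hw a.
have Hr : evec a - \sum_(k < 15) tb Wt a k *: evec (gen k) \in radZG.
  apply/radP => j; rewrite combM evecM GramE (C1 a j).
  by under [X in _ - X]eq_bigr do rewrite GramG'; rewrite subrr.
have := Hw _ Hr => /(congr1 (fun M : 'M[int]_(1,1) => M 0 0)).
by rewrite combM evecM mxE => /eqP; rewrite subr_eq0 => /eqP.
Qed.


Lemma ker1 w : inS w -> phi w = 0.
Proof.
case=> x ->.
have Hd : forall i : 'I_5, (nth 0 Dn (10 + i) %| u (10 + i) (Gram *m x^T))%Z.
  move=> i; rewrite /u.
  have -> : \sum_(k < 15) tb Ut (10 + i) k * (Gram *m x^T) (gen k) 0
      = \sum_(a < 24) x 0 a * \sum_(k < 15) tb Ut (10 + i) k * gr (gN k) a.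
    under eq_bigr do rewrite mxE mulr_sumr.
    rewrite exchange_big; apply: eq_bigr => a _; rewrite mulr_sumr.
    by apply: eq_bigr => k _; rewrite GramG' mxE; ring.
  by apply: rpred_sum => a _; apply: dvdz_mull; exact: C6.
have E0 : (u 10 (Gram *m x^T))%:~R = 0 :> 'Z_2.
  by apply/eqP; rewrite (zmodK 0); exact: (Hd (@Ordinal 5 0 isT)).
have E1 : (u 11 (Gram *m x^T))%:~R = 0 :> 'Z_2.
  by apply/eqP; rewrite (zmodK 0); exact: (Hd (@Ordinal 5 1 isT)).
have E2 : (u 12 (Gram *m x^T))%:~R = 0 :> 'Z_2.
  by apply/eqP; rewrite (zmodK 0); exact: (Hd (@Ordinal 5 2 isT)).
have E3 : (u 13 (Gram *m x^T))%:~R = 0 :> 'Z_2.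
  by apply/eqP; rewrite (zmodK 0); exact: (Hd (@Ordinal 5 3 isT)).
have E4 : (u 14 (Gram *m x^T))%:~R = 0 :> 'Z_16.
  by apply/eqP; rewrite (zmodK 14); exact: (Hd (@Ordinal 5 4 isT)).
by rewrite /phi E0 E1 E2 E3 E4.
Qed.

Lemma ker2 w : dualS w -> phi w = 0 -> inS w.
Proof.
move=> Hw H0.
have Hc : forall i : 'I_5, (nth 0 Dn (10 + i) %| u (10 + i) w)%Z.
  have h0 := congr1 (fun p : Dtarget => p.1.1.1.1) H0.
  have h1 := congr1 (fun p : Dtarget => p.1.1.1.2) H0.
  have h2 := congr1 (fun p : Dtarget => p.1.1.2) H0.
  have h3 := congr1 (fun p : Dtarget => p.1.2) H0.
  have h4 := congr1 (fun p : Dtarget => p.2) H0.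
  move: h0 h1 h2 h3 h4 => /= h0 h1 h2 h3 h4.
  move=> [[|[|[|[|[|n]]]]] hn] /=; last by [].
  - by rewrite -(zmodK 0) h0.
  - by rewrite -(zmodK 0) h1.
  - by rewrite -(zmodK 0) h2.
  - by rewrite -(zmodK 0) h3.
  - by rewrite -(zmodK 14) h4.
have Hd : forall i : 'I_15, (nth 0 Dn i %| u i w)%Z.
  move=> i; case: (ltnP i 10) => hi; first by rewrite C9 // dvd1z.
  have hj : (i - 10 < 5)%N by rewrite ltn_subLR // ltn_ord.
  have e : (10 + Ordinal hj)%N = i by rewrite /= subnKC.
  by have := Hc (Ordinal hj); rewrite e.
pose t (i : 'I_15) := (u i w %/ nth 0 Dn i)%Z.
have Ht : forall i : 'I_15, nth 0 Dn i * t i = u i w by move=> i; rewrite mulrC divzK.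
pose y (k : 'I_15) := \sum_(i < 15) tb Vt k i * t i.
pose X : 'cV[int]_24 := \sum_(k < 15) y k *: delta_mx (gen k) 0.
exists X^T; rewrite trmxK.
have Hw' := GramM_dual X.
have key : forall m : 'I_15, (Gram *m X) (gen m) 0 = w (gen m) 0.
  move=> m.
  have -> : (Gram *m X) (gen m) 0 = \sum_k y k * gr (gN m) (gN k).
    rewrite mulmx_sumr summxE; apply: eq_bigr => k _.
    by rewrite -scalemxAr [LHS]mxE -colE mxE GramE !genE.
  have E : forall i : 'I_15, \sum_(k < 15) tb Vt k i * t i * gr (gN m) (gN k)
                 = tb Uit m i * u i w.
    move=> i; rewrite -Ht mulrA -C4 mulr_suml; apply: eq_bigr => k _; ring.
  rewrite /y; under eq_bigr do rewrite mulr_suml.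
  rewrite exchange_big /=; under eq_bigr do rewrite E.
  rewrite /u; under eq_bigr do rewrite mulr_sumr.
  have F : forall k : 'I_15, \sum_(i < 15) tb Uit m i * (tb Ut i k * w (gen k) 0)
                    = (m == k)%:R * w (gen k) 0.
    by move=> k; rewrite -C5 mulr_suml; apply: eq_bigr => i _; rewrite mulrA.
  rewrite exchange_big /=; under eq_bigr do rewrite F.
  rewrite (bigD1 m) //= eqxx mul1r big1 ?addr0 // => k Hk.
  by rewrite eq_sym (negbTE Hk) mul0r.
apply/colP => a; rewrite (ext _ Hw') (ext _ Hw); apply: eq_bigr => k _.
by rewrite key.
Qed.

Theorem proposition4p1 :
  ((forall v : 'rV[int]_24, exists c : 'rV[int]_15,
      v - \sum_(k < 15) c 0 k *: evec (gen k) \in radZG)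
   /\ (forall c : 'rV[int]_15,
      \sum_(k < 15) c 0 k *: evec (gen k) \in radZG -> c = 0))
  /\ (exists phi : 'cV[int]_24 -> Dtarget,
      [/\ (forall w1 w2, dualS w1 -> dualS w2 -> phi (w1 + w2) = phi w1 + phi w2),
          (forall d : Dtarget, exists2 w, dualS w & phi w = d)
        & (forall w, dualS w -> (phi w = 0 <-> inS w))]).
Proof.
split; first by split; [exact: spanning | exact: indep].
exists phi; split.
- by move=> w1 w2 _ _; exact: phiD.
- exact: surj.
- by move=> w Hw; split; [exact: ker2 | exact: ker1].
Qed.
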